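(* Let $t$ be an odd prime and let $n\geq 1$ be an integer that is a quadratic nonresidue modulo $t$. Then for every $0\leq i\leq t-1$, \[ \overline{N}_{t-1}(i,t,n)=\frac{\overline{p}_{t-1}(n)}{t}\equiv 0 \pmod 2 . \] In particular, $\overline{p}_{t-1}(n)\equiv 0 \pmod{2t}$.
   Context: An overpartition of $n$ is a partition of $n$ in which the first occurrence of each distinct part size may be overlined. For an overpartition $\pi$, $\ell(\pi)$ denotes its total number of parts (overlined and non-overlined). A $(t-1)$-colored overpartition of $n$ is a tuple $\overrightarrow{\pi}=(\pi_1,\dots,\pi_{t-1})$ of overpartitions with $\sum_{k}|\pi_k|=n$, where $|\pi_k|$ is the sum of parts of $\pi_k$; $\overline{p}_{t-1}(n)$ denotes the number of such tuples. For such a tuple (with $t-1$ even) the multirank is \[ \overline{r}(\overrightarrow{\pi})=\sum_{k=1}^{(t-1)/2} k\bigl(\ell(\pi_k)-\ell(\pi_{t-k})\bigr). \] $\overline{N}_{t-1}(i,t,n)$ denotes the number of $(t-1)$-colored overpartitions of $n$ whose multirank $\overline{r}$ is congruent to $i$ modulo $t$. *)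

(* Defs.v *)
From HB Require Import structures.
From mathcomp Require Import all_boot all_order all_algebra.
Set Implicit Arguments. Unset Strict Implicit. Unset Printing Implicit Defensive.
Import Order.TTheory GRing.Theory Num.Theory.

(* An overpartition all of whose parts are <= N is encoded by its
   multiplicity/overline data: for j : 'I_N, (o j).1 is the number of parts
   equal to j+1 (at most N of them) and (o j).2 says whether the first
   occurrence of the part j+1 is overlined. *)
Definition opart (N : nat) := {ffun 'I_N -> 'I_N.+1 * bool}.

Definition opart_valid N (o : opart N) : bool :=
  [forall j, (o j).2 ==> (0 < (o j).1)].

Definition opart_size N (o : opart N) : nat :=
  \sum_(j < N) (j.+1 * (o j).1).

Definition opart_len N (o : opart N) : nat :=
  \sum_(j < N) (o j).1.

(* m-colored overpartitions of n: tuples (pi_1,...,pi_m), pi_k = F (k-1).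
   Every overpartition of size <= n has all parts <= n and all multiplicities
   <= n, so encoding with N = n loses nothing. *)
Definition colored_opart (m n : nat) (F : {ffun 'I_m -> opart n}) : bool :=
  [forall k, opart_valid (F k)] && (\sum_(k < m) opart_size (F k) == n).

Definition pbar (m n : nat) : nat :=
  #|[set F : {ffun 'I_m -> opart n} | colored_opart F]|.

(* l(pi_k) for k in 1..m (0 outside range, never used there) *)
Definition lenk m n (F : {ffun 'I_m -> opart n}) (k : nat) : nat :=
  if insub k.-1 is Some j then opart_len (F j) else 0.

Definition multirank m n (F : {ffun 'I_m -> opart n}) : int :=
  \sum_(1 <= k < (m./2).+1)
     (k%:Z * ((lenk F k)%:Z - (lenk F (m.+1 - k))%:Z))%R.

Definition Nbar (m i t n : nat) : nat :=
  #|[set F : {ffun 'I_m -> opart n} |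
       colored_opart F && ((multirank F - i%:Z) %% t%:Z == 0)%Z]|.

Definition qnr (n t : nat) : bool :=
  ~~ [exists x : 'I_t, x ^ 2 == n %[mod t]].

(* Main.v *)
Require Import Defs.
From mathcomp Require Import all_boot all_order all_algebra.
From mathcomp Require Import ring zify.
From mathcomp Require Import algC cyclotomic.
Set Implicit Arguments. Unset Strict Implicit. Unset Printing Implicit Defensive.
Import Order.TTheory GRing.Theory Num.Theory.
Local Open Scope ring_scope.

Section Trunc.
Variable F : fieldType.
Implicit Types p q r : {poly F}.

Definition eqm N p q := ('X^N %| p - q).

Lemma eqm_refl N p : eqm N p p.
Proof. by rewrite /eqm subrr dvdp0. Qed.

Lemma eqm_sym N p q : eqm N p q -> eqm N q p.
Proof. by rewrite /eqm -opprB dvdpNr. Qed.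

Lemma eqm_trans N p q r : eqm N p q -> eqm N q r -> eqm N p r.
Proof.
by rewrite /eqm => h1 h2; have := dvdp_add h1 h2; rewrite addrA subrK.
Qed.

Lemma eqmD N p p' q q' : eqm N p p' -> eqm N q q' -> eqm N (p + q) (p' + q').
Proof.
rewrite /eqm => h1 h2; have := dvdp_add h1 h2.
by rewrite opprD addrACA.
Qed.

Lemma eqmM N p p' q q' : eqm N p p' -> eqm N q q' -> eqm N (p * q) (p' * q').
Proof.
rewrite /eqm => h1 h2.
have -> : p * q - p' * q' = (p - p') * q + p' * (q - q').
  by rewrite mulrBl mulrBr addrA subrK.
by apply: dvdp_add; [apply: dvdp_mulr | apply: dvdp_mull].
Qed.

Lemma eqm_prod N (I : Type) (s : seq I) (P : pred I) (f g : I -> {poly F}) :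
  (forall i, P i -> eqm N (f i) (g i)) ->
  eqm N (\prod_(i <- s | P i) f i) (\prod_(i <- s | P i) g i).
Proof.
move=> h; elim/big_rec2: _; first exact: eqm_refl.
by move=> i a b Pi hab; apply: eqmM => //; apply: h.
Qed.

Lemma eqm_coef N p q i : eqm N p q -> (i < N)%N -> p`_i = q`_i.
Proof.
rewrite /eqm => /divpK h lt; apply/eqP; rewrite -subr_eq0 -coefB -h.
by rewrite coefMXn lt.
Qed.

Lemma eqm_high N k p : (N <= k)%N -> eqm N ('X^k * p) 0.
Proof.
move=> le; rewrite /eqm subr0; apply: dvdp_mulr.
by exact: dvdp_exp2l.
Qed.

Lemma eqm_addhigh N k p q : (N <= k)%N -> eqm N (p + 'X^k * q) p.
Proof.
move=> le; rewrite -{2}[p]addr0; apply: eqmD; [exact: eqm_refl|exact: eqm_high].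
Qed.

Lemma eqm_le N M p q : (M <= N)%N -> eqm N p q -> eqm M p q.
Proof. by move=> le; apply: dvdp_trans; rewrite dvdp_exp2l. Qed.

Lemma eqm_cancel N a a' p q : eqm N (a * a') 1 -> eqm N (a * p) (a * q) -> eqm N p q.
Proof.
move=> ha h.
have e : forall r, eqm N (a' * (a * r)) r.
  move=> r; rewrite mulrA [a' * a]mulrC -{2}[r]mul1r; apply: eqmM => //; exact: eqm_refl.
apply: eqm_trans (eqm_sym (e p)) _; apply: eqm_trans (e q).
by apply: eqmM => //; exact: eqm_refl.
Qed.

Lemma eqm_prod1 N (I : Type) (s : seq I) (P : pred I) (f : I -> {poly F}) :
  (forall i, P i -> eqm N (f i) 1) -> eqm N (\prod_(i <- s | P i) f i) 1.
Proof.
move=> h; elim/big_rec: _ => [|i p Pi hp]; first exact: eqm_refl.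
rewrite -[X in eqm _ _ X]mulr1; apply: eqmM => //; exact: h.
Qed.

Lemma eqm_inv N p : p`_0 = 1 -> exists p', eqm N (p * p') 1.
Proof.
move=> p0.
have : 'X %| 1 - p.
  by rewrite -['X]subr0 dvdp_XsubCl /root horner_coef0 coefB p0 coefC subrr.
move/divpK; set r := (1 - p) %/ 'X => hr.
exists (\sum_(m < N) ('X * r) ^+ m).
have -> : p = 1 - 'X * r by rewrite mulrC hr opprB addrC subrK.
have -> : (1 - 'X * r) * \sum_(m < N) ('X * r) ^+ m = 1 - ('X * r) ^+ N.
  by rewrite -opprB mulNr -subrX1 opprB.
rewrite /eqm addrAC subrr add0r dvdpNr exprMn; apply: dvdp_mulr; exact: dvdpp.
Qed.
End Trunc.

Definition tri (j : nat) : nat := \sum_(i < j) i.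
Lemma triS j : tri j.+1 = (tri j + j)%N.
Proof. by rewrite /tri big_ord_recr. Qed.
Lemma tri2 j : (tri j * 2 + j = j * j)%N.
Proof.
elim: j => [|j IH]; first by rewrite /tri big_ord0.
rewrite triS mulnDl mulSn mulnS; lia.
Qed.
Lemma expo M j : (j <= 2*M.+1)%N -> (tri j * 2 + (2*M).+1 * (2*M.+1 - j) = M.+1 * M + M.+1 * (2*M).+1 + ((j - M.+1) + (M.+1 - j))^2)%N.
Proof.
move=> le; have t2 := tri2 j.
have tz : (tri j)%:Z * 2 = j%:Z * j%:Z - j%:Z.
  by rewrite -PoszM -t2 PoszD PoszM; ring.
have hS : forall k : nat, (k.+1)%:Z = k%:Z + 1 by move=> k; rewrite -addn1 PoszD.
case: (leqP j M.+1) => h.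
  set d := (M.+1 - j)%N.
  have hj : M%:Z = j%:Z + d%:Z - 1.
    have : (j + d = M.+1)%N by rewrite subnKC.
    by move/(congr1 Posz); rewrite PoszD => ->; rewrite -addn1 PoszD; ring.
  have -> : (2*M.+1 - j = j + 2*d)%N by lia.
  have -> : (j - M.+1 = 0)%N by lia.
  apply/eqP; rewrite -eqz_nat !(PoszD, PoszM, natrX) /=; apply/eqP.
  rewrite !hS !PoszM tz hj; ring.
set d := (j - M.+1)%N.
have hj : j%:Z = M%:Z + 1 + d%:Z.
  have : (M.+1 + d = j)%N by rewrite subnKC // ltnW.
  by move/(congr1 Posz); rewrite PoszD => <-; rewrite -addn1 PoszD.
have -> : (2*M.+1 - j = M.+1 - d)%N by lia.
have -> : (M.+1 - j = 0)%N by lia.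
have hd : (d <= M.+1)%N by lia.
apply/eqP; rewrite -eqz_nat !(PoszD, PoszM, natrX) /=; apply/eqP.
rewrite -(subzn hd) !hS !PoszM tz hj; ring.
Qed.

Section QBin.
Variable R : comNzRingType.
Variable Q : R.

Fixpoint qbin (m j : nat) : R :=
  match m, j with
  | 0, 0 => 1
  | 0, _.+1 => 0
  | m'.+1, 0 => 1
  | m'.+1, j'.+1 => qbin m' j' + Q ^+ j'.+1 * qbin m' j'.+1
  end.

Lemma qbin_gt m j : (m < j)%N -> qbin m j = 0.
Proof.
elim: m j => [|m IH] [|j] //= lt.
by rewrite !IH ?mulr0 ?addr0 // ltnW.
Qed.

Lemma bump0 i : bump 0 i = i.+1. Proof. by []. Qed.

Lemma qbin0 m : qbin m 0 = 1. Proof. by case: m. Qed.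


Lemma qbinomial m x y :
  \prod_(i < m) (x + y * Q ^+ i) =
  \sum_(j < m.+1) Q ^+ tri j * qbin m j * x ^+ (m - j) * y ^+ j.
Proof.
elim: m y => [|m IH] y.
  by rewrite big_ord0 big_ord1 /= /tri big_ord0 !expr0 !mulr1.
rewrite big_ord_recl expr0 mulr1.
under eq_bigr => i _ do rewrite lift0 exprS mulrA.
rewrite IH mulrDl !big_distrr /= [in RHS]big_ord_recl /=.
under [in RHS]eq_bigr => i _ do rewrite bump0 add0n mulrDr !mulrDl.
rewrite big_split /= addrCA [LHS]addrC; congr (_ + _).
  apply: eq_bigr => j _; rewrite triS subSS exprS exprMn exprD; ring.
rewrite big_ord_recl [in RHS]big_ord_recr /= (qbin_gt (ltnSn m)).
rewrite /tri big_ord0 !expr0 qbin0 subn0 !mulr1 !mulr0 !mul0r addr0 mul1r -exprS; congr (_ + _).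
  by rewrite mul1r subn0.
apply: eq_bigr => j _; rewrite bump0 -/(tri _) -/(tri _) triS subSS exprS exprMn exprD.
rewrite -(subnSK (ltn_ord j)) !exprS; ring.
Qed.

Definition poch k := \prod_(i < k) (1 - Q ^+ i.+1).

Lemma pochS k : poch k.+1 = poch k * (1 - Q ^+ k.+1).
Proof. by rewrite /poch big_ord_recr. Qed.

Lemma qbin_prod m j : (j <= m)%N -> qbin m j * poch j * poch (m - j) = poch m.
Proof.
elim: m j => [|m IH] [|j] //= le.
- by rewrite /poch !big_ord0 !mulr1.
- by rewrite /poch big_ord0 subn0 !mul1r.
rewrite subSS mulrDl mulrDl.
have e1 : qbin m j * poch j.+1 * poch (m - j) = poch m * (1 - Q ^+ j.+1).
  by rewrite pochS -(IH j) // ; ring.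
have e2 : Q ^+ j.+1 * qbin m j.+1 * poch j.+1 * poch (m - j) =
          Q ^+ j.+1 * poch m * (1 - Q ^+ (m - j)).
  case: (ltnP j m) => [lt|ge]; last first.
    have -> : j = m by apply/eqP; rewrite eqn_leq ge andbT.
    by rewrite subnn expr0 subrr (qbin_gt (ltnSn m)) !mulr0 !mul0r.
  rewrite -(subnSK lt) (pochS (m - j.+1)) -(IH j.+1) //; ring.
have eE : Q ^+ m.+1 = Q ^+ j.+1 * Q ^+ (m - j).
  by rewrite -exprD addSn subnKC.
rewrite e1 e2 pochS eE; ring.
Qed.
End QBin.
Section JTP.
Variable F : fieldType.
Local Notation PF := {poly F}.

Definition oddp (N : nat) : PF := \prod_(i < N) (1 - 'X^((2 * i).+1)).
Definition dd (N j : nat) := ((j - N) + (N - j))%N.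

Lemma Xn_neq0 k : ('X^k : PF) != 0.
Proof. by rewrite expf_neq0 // polyX_eq0. Qed.

Lemma lhs_prod M :
  \prod_(i < 2 * M.+1) ('X^((2 * M).+1) + -1 * ('X^2 : PF) ^+ i) =
  (-1) ^+ M.+1 * 'X^(M.+1 * M + M.+1 * (2 * M).+1) * oddp M.+1 ^+ 2.
Proof.
have -> : (2 * M.+1 = M.+1 + M.+1)%N by rewrite mul2n addnn.
rewrite big_split_ord /=.
have h1 : \prod_(i < M.+1) ('X^((2 * M).+1) + -1 * ('X^2 : PF) ^+ i) =
   (-1) ^+ M.+1 * 'X^(M.+1 * M) * oddp M.+1.
  have e : forall i : 'I_M.+1, 'X^((2 * M).+1) + -1 * ('X^2 : PF) ^+ i
       = - 'X^(2 * i) * (1 - 'X^((2 * (M - i)).+1)).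
    move=> i; rewrite /= mulN1r -exprM mulNr mulrBr mulr1 -exprD opprB addrC.
    have -> : (2 * i + (2 * (M - i)).+1 = (2 * M).+1)%N.
      have := ltn_ord i; lia.
    by rewrite addrC.
  rewrite (eq_bigr _ (fun i _ => e i)) big_split /= prodrN card_ord prodrXr.
  have -> : (\sum_(i < M.+1) 2 * i = M.+1 * M)%N.
    rewrite -big_distrr /= -/(tri _) mulnC.
    have := tri2 M.+1; rewrite mulSn; lia.
  congr (_ * _).
  rewrite /oddp (reindex_inj rev_ord_inj) /=; apply: eq_bigr => i _.
  by rewrite subSS subKn // -ltnS.
have h2 : \prod_(i < M.+1) ('X^((2 * M).+1) + -1 * ('X^2 : PF) ^+ (M.+1 + i)) =
   'X^(M.+1 * (2 * M).+1) * oddp M.+1.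
  clear h1.
  have e : forall i : 'I_M.+1, 'X^((2 * M).+1) + -1 * ('X^2 : PF) ^+ (M.+1 + i)
       = 'X^((2 * M).+1) * (1 - 'X^((2 * i).+1)).
    move=> i; rewrite /= mulN1r -exprM mulrBr mulr1 -exprD.
    by have -> : ((2 * M).+1 + (2 * i).+1 = 2 * (M.+1 + i))%N by lia.
  rewrite (eq_bigr _ (fun i _ => e i)) big_split /= prodr_const card_ord -exprM.
  by rewrite mulnC.
rewrite h1 h2 exprD; ring.
Qed.

Lemma jtp M :
  oddp M.+1 ^+ 2 = \sum_(j < (2 * M.+1).+1)
     (-1) ^+ (j + M.+1) * 'X^(dd M.+1 j ^ 2) * qbin ('X^2 : PF) (2 * M.+1) j.
Proof.
have Hq := qbinomial ('X^2 : PF) (2 * M.+1) ('X^((2 * M).+1)) (-1).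
rewrite lhs_prod in Hq.
set e := (M.+1 * M + M.+1 * (2 * M).+1)%N in Hq.
have Hr : forall j : 'I_(2 * M.+1).+1,
  ('X^2 : PF) ^+ tri j * qbin ('X^2) (2 * M.+1) j * 'X^((2 * M).+1) ^+ (2 * M.+1 - j) * (-1) ^+ j
  = (-1) ^+ M.+1 * 'X^e * ((-1) ^+ (j + M.+1) * 'X^(dd M.+1 j ^ 2) * qbin ('X^2) (2 * M.+1) j).
  move=> j; rewrite -!exprM.
  have ex : 'X^(2 * tri j) * 'X^((2 * M).+1 * (2 * M.+1 - j)) = 'X^e * 'X^(dd M.+1 j ^ 2) :> PF.
    by rewrite -!exprD [(2 * tri j)%N]mulnC (expo (ltn_ord j : (j <= 2 * M.+1)%N)).
  transitivity ('X^(2 * tri j) * 'X^((2 * M).+1 * (2 * M.+1 - j)) * qbin ('X^2 : PF) (2 * M.+1) j * (-1) ^+ j); first by ring.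
  rewrite ex.
  have s : forall a b : nat, (-1) ^+ a * (-1) ^+ (b + a) = (-1) ^+ b :> PF.
    by move=> a b; rewrite -exprD addnC -addnA addnn -mul2n mulnC exprD exprM sqrr_sign mulr1.
  rewrite -(s M.+1 j); ring.
rewrite (eq_bigr _ (fun j _ => Hr j)) -big_distrr /= in Hq.
apply: (mulfI (mulf_neq0 (negbT (signr_eq0 _ _)) (Xn_neq0 e))).
exact: Hq.
Qed.
End JTP.
Section Gauss.
Variable F : fieldType.
Local Notation PF := {poly F}.
Local Notation Q2 := ('X^2 : PF).

Definition prp (Q : PF) a k := \prod_(i < k) (1 - Q ^+ (a + i).+1).

Lemma poch_split (Q : PF) a k : poch Q (a + k) = poch Q a * prp Q a k.
Proof. by rewrite /poch big_split_ord. Qed.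

Lemma one_sub_neq0 m : (0 < m)%N -> (1 - 'X^m : PF) != 0.
Proof.
case: m => // m _; apply/eqP => /(congr1 (fun p : PF => p`_0)).
by rewrite coefB coef1 coefXn /= subr0 coef0 => /eqP; rewrite oner_eq0.
Qed.

Lemma pochQ2_neq0 k : poch Q2 k != 0.
Proof.
rewrite /poch; apply/prodf_neq0 => i _; rewrite -exprM; exact: one_sub_neq0.
Qed.

Lemma eqm_sum N (I : Type) (s : seq I) (P : pred I) (f g : I -> PF) :
  (forall i, P i -> eqm N (f i) (g i)) ->
  eqm N (\sum_(i <- s | P i) f i) (\sum_(i <- s | P i) g i).
Proof.
move=> h; elim/big_rec2: _; first exact: eqm_refl.
by move=> i a b Pi hab; apply: eqmD => //; apply: h.
Qed.

Lemma eqm_X N k (p q : PF) : eqm N p q -> eqm (k + N) ('X^k * p) ('X^k * q).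
Proof. by rewrite /eqm -mulrBr exprD; apply: dvdp_mul. Qed.

Lemma eqm_1subX K m : (K <= m)%N -> eqm K (1 - 'X^m : PF) 1.
Proof. by move=> le; rewrite /eqm addrAC subrr add0r dvdpNr dvdp_exp2l. Qed.

Lemma prpQ2_eqm K a k : (K <= 2 * a.+1)%N -> eqm K (prp Q2 a k) 1.
Proof.
move=> le; rewrite /prp; elim/big_rec: _ => [|i p _ hp]; first exact: eqm_refl.
rewrite -[X in eqm _ _ X]mulr1; apply: eqmM => //; rewrite -exprM.
apply: eqm_1subX.
by apply: (leq_trans le); rewrite leq_mul2l /= ltnS leq_addr.
Qed.

Lemma trunc_core N a k1 j : N = (a + k1)%N -> (j = a \/ j = a + 2 * k1)%N ->
  eqm N.+1 ('X^(dd N j ^ 2) * (poch Q2 N * qbin Q2 (2 * N) j))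
                  ('X^(dd N j ^ 2)).
Proof.
move=> hN hj.
have key : poch Q2 N * qbin Q2 (2 * N) j = prp Q2 a k1 * prp Q2 (N + k1) a.
  have hq := qbin_prod Q2 (_ : (j <= 2 * N)%N).
  have ep : poch Q2 j * poch Q2 (2 * N - j) = poch Q2 a * poch Q2 (N + k1).
    case: hj => ->.
      by have -> : (2 * N - a = N + k1)%N by rewrite hN; lia.
    have -> : (2 * N - (a + 2 * k1) = a)%N by rewrite hN; lia.
    by rewrite mulrC hN -addnA addnn -mul2n.
  have e2N : (2 * N = (N + k1) + a)%N by rewrite hN; lia.
  apply: (mulfI (mulf_neq0 (pochQ2_neq0 a) (pochQ2_neq0 (N + k1)))).
  rewrite -{1}ep.
  transitivity (poch Q2 N * (qbin Q2 (2*N) j * poch Q2 j * poch Q2 (2*N - j))); first by ring.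
  rewrite hq; last by case: hj => ->; rewrite hN; lia.
  have pN : poch Q2 N = poch Q2 a * prp Q2 a k1 by rewrite hN poch_split.
  rewrite pN e2N poch_split; ring.
rewrite key.
have hd : dd N j = k1 by rewrite /dd hN; case: hj => ->; lia.
rewrite hd.
have h1 : eqm (2 * a.+1) (prp Q2 a k1 * prp Q2 (N + k1) a) 1.
  rewrite -[X in eqm _ _ X]mulr1; apply: eqmM; apply: prpQ2_eqm => //.
  by rewrite leq_mul2l /= ltnS hN; lia.
have := eqm_X (k1 ^ 2) h1; rewrite mulr1; apply: eqm_le.
have : (k1 <= k1 ^ 2)%N by case: k1 {hd h1 key hN hj} => // k; rewrite expnS leq_pmulr.
rewrite hN; lia.
Qed.

Definition theta M : PF :=
  \sum_(j < (2 * M.+1).+1) (-1) ^+ (j + M.+1) * 'X^(dd M.+1 j ^ 2).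

Lemma gauss_core M : eqm M.+2 (poch Q2 M.+1 * oddp F M.+1 ^+ 2) (theta M).
Proof.
rewrite jtp mulr_sumr; apply: eqm_sum => j _.
have -> : poch Q2 M.+1 * ((-1) ^+ (j + M.+1) * 'X^(dd M.+1 j ^ 2) * qbin Q2 (2 * M.+1) j) = (-1) ^+ (j + M.+1) * ('X^(dd M.+1 j ^ 2) * (poch Q2 M.+1 * qbin Q2 (2 * M.+1) j)) by ring.
apply: eqmM; first exact: eqm_refl.
have [a [k1 [hN hj]]] : exists a k1, (M.+1 = a + k1)%N /\ (nat_of_ord j = a \/ nat_of_ord j = a + 2 * k1)%N.
  case: (leqP j M.+1) => h.
    by exists j, (M.+1 - j)%N; split; [rewrite subnKC | left].
  exists (2 * M.+1 - j)%N, (j - M.+1)%N; split; last right; have := ltn_ord j; lia.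
exact: trunc_core hN hj.
Qed.
End Gauss.
Section Euler.
Variable F : fieldType.
Local Notation PF := {poly F}.
Local Notation Q2 := ('X^2 : PF).

Definition A1 N : PF := \prod_(i < N) (1 + 'X^(i.+1)).

Lemma E1 N : poch ('X : PF) (2 * N) = oddp F N * poch Q2 N.
Proof.
elim: N => [|N IH]; first by rewrite /poch /oddp !big_ord0 mulr1.
rewrite mulnS !pochS IH /oddp big_ord_recr /= -!exprM.
have -> : (2 * N.+1 = (2 * N).+2)%N by rewrite mulnS addnC addn2.
ring.
Qed.

Lemma E2 N : poch ('X : PF) N * A1 N = poch Q2 N.
Proof.
rewrite /poch /A1 -big_split /=; apply: eq_bigr => i _.
rewrite -exprM mulnC exprM; ring.
Qed.

Lemma E3 N : eqm N.+1 (poch ('X : PF) (N + N)) (poch 'X N).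
Proof.
rewrite poch_split -[X in eqm _ _ X]mulr1; apply: eqmM; first exact: eqm_refl.
rewrite /prp; elim/big_rec: _ => [|i p _ hp]; first exact: eqm_refl.
rewrite -[X in eqm _ _ X]mulr1; apply: eqmM => //; apply: eqm_1subX.
by rewrite ltnS leq_addr.
Qed.

Lemma gauss M : eqm M.+2 (poch ('X : PF) M.+1) (theta F M * A1 M.+1).
Proof.
set N := M.+1.
have h : eqm N.+1 (poch Q2 N * oddp F N ^+ 2 * A1 N) (poch 'X N).
  have e1 : poch Q2 N * oddp F N ^+ 2 * A1 N = oddp F N * poch 'X (N + N) * A1 N.
    by rewrite addnn -mul2n E1; ring.
  rewrite e1.
  apply: (eqm_trans (_ : eqm _ _ (oddp F N * poch 'X N * A1 N))).
    by apply: eqmM; [apply: eqmM; [exact: eqm_refl | exact: E3] | exact: eqm_refl].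
  have e2 : oddp F N * poch 'X N * A1 N = poch 'X (N + N).
    by rewrite addnn -mul2n E1 -mulrA E2 mulrC.
  rewrite e2; exact: E3.
apply: eqm_sym; apply: (eqm_trans _ h); apply: eqmM; last exact: eqm_refl.
exact: eqm_sym (gauss_core F M).
Qed.
End Euler.
Section Expand.
Variable R : comNzRingType.
Variables (xi : R) (m n : nat).
Local Notation PR := {poly R}.

Definition wgt (k0 j : nat) (x : 'I_n.+1 * bool) : PR :=
  (x.2 ==> (0 < x.1)%N)%:R * ((xi ^+ (k0.+1 * x.1))%:P * 'X^(j.+1 * x.1)).

Definition Lf k0 j : PR := \sum_(x : 'I_n.+1 * bool) wgt k0 j x.

Definition wt (F : {ffun 'I_m -> opart n}) : nat :=
  \sum_(k0 < m) k0.+1 * opart_len (F k0).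

Lemma prod_bool (I : finType) (b : I -> bool) :
  \prod_(i : I) ((b i)%:R : PR) = ([forall i, b i])%:R.
Proof.
case: (boolP [forall i, b i]) => [/forallP h|/forallPn [i hi]].
  by rewrite big1 // => i _; rewrite h.
by rewrite (bigD1 i) //= (negbTE hi) mul0r.
Qed.

Lemma prod_j k0 (o : opart n) :
  \prod_(j < n) wgt k0 j (o j) =
  (opart_valid o)%:R * ((xi ^+ (k0.+1 * opart_len o))%:P * 'X^(opart_size o)).
Proof.
rewrite /wgt big_split /= prod_bool big_split /= prodrXr.
rewrite -rmorph_prod /= prodrXr /opart_len /opart_size big_distrr.
done.
Qed.

Lemma expand :
  (\prod_(k0 < m) \prod_(j < n) Lf k0 j)`_n =
  \sum_(F : {ffun 'I_m -> opart n} | colored_opart F) xi ^+ wt F.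
Proof.
rewrite /Lf.
under eq_bigr => k0 _ do rewrite bigA_distr_bigA /=.
rewrite bigA_distr_bigA /= coef_sum [RHS]big_mkcond /=; apply: eq_bigr => F _.
under eq_bigr => k0 _ do rewrite prod_j.
rewrite big_split /= prod_bool big_split /= -rmorph_prod /= !prodrXr.
rewrite /colored_opart.
case: (boolP [forall k, opart_valid (F k)]) => hv /=; last by rewrite !mul0r coef0.
rewrite mul1r coefCM coefXn eq_sym; case: eqP => _; last by rewrite mulr0.
by rewrite mulr1 /wt.
Qed.
End Expand.
Section LfForm.
Variable R : comNzRingType.
Variables (xi : R) (n : nat).
Local Notation PR := {poly R}.

Definition zz k0 j : PR := (xi ^+ k0.+1)%:P * 'X^(j.+1).

Lemma Lf_eq k0 j : Lf xi n k0 j = 2%:R * \sum_(a < n.+1) zz k0 j ^+ a - 1.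
Proof.
rewrite /Lf -(pair_bigA _ (fun a b => wgt xi k0 j (a, b))) /=.
under eq_bigr => a _ do rewrite big_bool /wgt /= mul1r.
have ez : forall a : nat, (xi ^+ (k0.+1 * a))%:P * 'X^(j.+1 * a) = zz k0 j ^+ a.
  by move=> a; rewrite /zz exprMn -rmorphXn /= -!exprM.
under eq_bigr => a _ do rewrite !ez.
rewrite big_split /=.
have hS : \sum_(a < n.+1) (0 < a)%N%:R * zz k0 j ^+ a = \sum_(a < n.+1) zz k0 j ^+ a - 1.
  rewrite big_ord_recl [in RHS]big_ord_recl /= mul0r add0r expr0 addrC addKr.
  by apply: eq_bigr => a _; rewrite mul1r.
rewrite hS; ring.
Qed.

Lemma Lf_rel k0 j : (1 - zz k0 j) * Lf xi n k0 j = 1 + zz k0 j - 2%:R * zz k0 j ^+ n.+1.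
Proof.
rewrite Lf_eq.
have h : (1 - zz k0 j) * \sum_(a < n.+1) zz k0 j ^+ a = 1 - zz k0 j ^+ n.+1.
  by rewrite -opprB mulNr -subrX1 opprB.
transitivity (2%:R * ((1 - zz k0 j) * \sum_(a < n.+1) zz k0 j ^+ a) - (1 - zz k0 j)); first by ring.
rewrite h; ring.
Qed.

Lemma Lf_par k0 j : Lf xi n k0 j = 1 + 2%:R * (\sum_(a < n.+1) zz k0 j ^+ a - 1).
Proof. rewrite Lf_eq; ring. Qed.
End LfForm.
Section Roots.
Variable F : fieldType.
Variables (T : nat) (xi : F).
Hypothesis prim : T.+1.-primitive_root xi.
Hypothesis oddt : odd T.+1.
Local Notation PF := {poly F}.

Lemma tri_t : (T.+1 %| tri T.+1)%N.
Proof.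
have h := tri2 T.+1.
have : (tri T.+1 * 2 = T.+1 * T)%N by move: h; rewrite mulnS; lia.
move: oddt => /= /negbTE ev.
have [s ->] : exists s, T = (s * 2)%N.
  by exists T./2; rewrite -[LHS](odd_double_half T) ev add0n -mul2n mulnC.
by rewrite mulnA => /eqP; rewrite eqn_mul2r /= => /eqP ->; apply: dvdn_mulr.
Qed.

Lemma prod_one_sub (y : PF) : \prod_(c < T.+1) (1 - (xi ^+ c)%:P * y) = 1 - y ^+ T.+1.
Proof.
set xi' := xi ^+ T.
have prim' : T.+1.-primitive_root xi'.
  by rewrite prim_root_exp_coprime // coprimenS.
have hf := factor_Xn_sub_1 prim'.
have := congr1 (fun p => p \Po y) hf.
rewrite rmorph_prod /= big_mkord rmorphB rmorphXn /= comp_polyX rmorph1.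
under eq_bigr => i _ do rewrite rmorphB /= comp_polyX comp_polyC.
move=> hy.
have e : forall c : 'I_T.+1, 1 - (xi ^+ c)%:P * y = - (xi ^+ c)%:P * (y - (xi' ^+ c)%:P).
  move=> c; rewrite mulNr mulrBr -rmorphM /= -exprMn /xi' -exprS.
  by rewrite (prim_expr_order prim) expr1n opprB.
rewrite (eq_bigr _ (fun c _ => e c)) big_split /= hy prodrN card_ord.
rewrite -rmorph_prod /= prodrXr -/(tri _).
have [k ->] := dvdnP tri_t.
rewrite exprM exprAC (prim_expr_order prim) expr1n mulr1 -signr_odd oddt expr1; ring.
Qed.
End Roots.
Section Sparse.
Variable F : fieldType.
Variable t : nat.
Local Notation PF := {poly F}.
Definition sparse (p : PF) := forall i, ~~ (t %| i)%N -> p`_i = 0.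

Lemma sparse_mul p q : sparse p -> sparse q -> sparse (p * q).
Proof.
move=> hp hq i ti; rewrite coefM big1 // => j _.
case: (boolP (t %| j)%N) => tj; last by rewrite hp ?mul0r.
rewrite hq ?mulr0 //; apply: contra ti => h.
by rewrite -(subnKC (_ : (j <= i)%N)) ?dvdn_add // -ltnS.
Qed.

Lemma sparse_add p q : sparse p -> sparse q -> sparse (p + q).
Proof. by move=> hp hq i ti; rewrite coefD hp ?hq ?addr0. Qed.

Lemma sparse1 : sparse 1.
Proof. move=> [|i] ti; first by rewrite dvdn0 in ti. by rewrite coef1. Qed.

Lemma sparseXn k : (t %| k)%N -> sparse 'X^k.
Proof.
move=> tk i ti; rewrite coefXn; case: eqP => // e.
by rewrite e tk in ti.
Qed.

Lemma sparseN p : sparse p -> sparse (- p).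
Proof. by move=> hp i ti; rewrite coefN hp ?oppr0. Qed.

Lemma sparse_prod (I : Type) (r : seq I) (P : pred I) (f : I -> PF) :
  (forall i, P i -> sparse (f i)) -> sparse (\prod_(i <- r | P i) f i).
Proof. by move=> h; apply: big_ind => //; [exact: sparse1 | exact: sparse_mul]. Qed.

Lemma sparse_sum (I : Type) (r : seq I) (P : pred I) (f : I -> PF) :
  (forall i, P i -> sparse (f i)) -> sparse (\sum_(i <- r | P i) f i).
Proof. by move=> h; apply: big_ind => //; [move=> i _; rewrite coef0 | exact: sparse_add]. Qed.
End Sparse.

Section Main.
Variable F : fieldType.
Variables (T : nat) (xi : F).
Hypothesis prim : T.+1.-primitive_root xi.
Hypothesis oddt : odd T.+1.
Variable M : nat.
Hypothesis hqnr : qnr M.+1 T.+1.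
Local Notation PF := {poly F}.
Local Notation N := M.+1.

Lemma col_one_sub (y : PF) : (1 - y) * \prod_(k0 < T) (1 - (xi ^+ k0.+1)%:P * y) = 1 - y ^+ T.+1.
Proof.
rewrite -(prod_one_sub prim oddt) big_ord_recl expr0 mul1r.
by congr (_ * _); apply: eq_bigr => i _; rewrite lift0.
Qed.

Lemma col_one_add (y : PF) : (1 + y) * \prod_(k0 < T) (1 + (xi ^+ k0.+1)%:P * y) = 1 + y ^+ T.+1.
Proof.
have := col_one_sub (- y); rewrite opprK exprNn -signr_odd oddt expr1 mulN1r opprK.
by under eq_bigr => i _ do rewrite mulrN opprK.
Qed.

Lemma eqm_drop2 (z : PF) j c : z = c%:P * 'X^(j.+1) ->
  eqm N.+1 (1 + z - 2%:R * z ^+ N.+1) (1 + z).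
Proof.
move=> ->; rewrite /eqm addrAC subrr add0r dvdpNr; apply: dvdp_mull.
rewrite exprMn; apply: dvdp_mull; rewrite -exprM; apply: dvdp_exp2l.
by rewrite mulnC leq_pmulr.
Qed.

Lemma step_j j : eqm N.+1 ((1 - 'X^(j.+1) ^+ T.+1) * (1 + 'X^(j.+1)) * \prod_(k0 < T) Lf xi N k0 j)
   ((1 - 'X^(j.+1)) * (1 + 'X^(j.+1) ^+ T.+1)).
Proof.
rewrite -col_one_sub -col_one_add.
set Pm := \prod_(k0 < T) _.
have -> : (1 - 'X^(j.+1)) * Pm * (1 + 'X^(j.+1)) * \prod_(k0 < T) Lf xi N k0 j
   = (1 - 'X^(j.+1)) * (1 + 'X^(j.+1)) * (Pm * \prod_(k0 < T) Lf xi N k0 j) by ring.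
rewrite [X in eqm _ _ X]mulrA; apply: eqmM; first exact: eqm_refl.
rewrite /Pm -big_split /=; apply: eqm_prod => k0 _.
have := Lf_rel xi N k0 j; rewrite /zz => ->.
exact: eqm_drop2.
Qed.

Lemma A1_coef0 : (A1 F N)`_0 = 1.
Proof.
rewrite -horner_coef0 /A1 horner_prod big1 // => i _.
by rewrite hornerD hornerC hornerXn expr0n /= addr0.
Qed.

Lemma qnr_ndvd d : (d ^ 2 <= N)%N -> ~~ (T.+1 %| N - d ^ 2)%N.
Proof.
move=> le; apply: contra hqnr => h; apply/existsP.
exists (Ordinal (ltn_pmod d (ltn0Sn T))) => /=.
by rewrite modnXm eq_sym eqn_mod_dvd.
Qed.

Lemma vanish : (\prod_(k0 < T) \prod_(j < N) Lf xi N k0 j)`_N = 0.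
Proof.
set E := \prod_(k0 < T) \prod_(j < N) Lf xi N k0 j.
set B1 := \prod_(j < N) (1 - 'X^(j.+1) ^+ T.+1 : PF).
set B2 := \prod_(j < N) (1 + 'X^(j.+1) ^+ T.+1 : PF).
have h3 : eqm N.+1 (B1 * A1 F N * E) (poch 'X N * B2).
  have -> : E = \prod_(j < N) \prod_(k0 < T) Lf xi N k0 j by rewrite /E exchange_big.
  rewrite /B1 /B2 /A1 /poch -!big_split /=; apply: eqm_prod => j _; exact: step_j.
have h4 := gauss F M.
have [A1' hA1] : exists p, eqm N.+1 (A1 F N * p) 1 by apply: eqm_inv; exact: A1_coef0.
have h5 : eqm N.+1 (B1 * E) (theta F M * B2).
  apply: (eqm_cancel hA1).
  have -> : A1 F N * (B1 * E) = B1 * A1 F N * E by ring.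
  apply: eqm_trans h3 _.
  have -> : A1 F N * (theta F M * B2) = theta F M * A1 F N * B2 by ring.
  by apply: eqmM => //; exact: eqm_refl.
have [Binv [hB sB]] : exists p, eqm N.+1 (B1 * p) 1 /\ sparse T.+1 p.
  exists (\prod_(j < N) \sum_(a < N.+1) ('X^(j.+1) ^+ T.+1) ^+ a); split.
    rewrite /B1 -big_split /=; apply: eqm_prod1 => j _.
    rewrite -opprB mulNr -subrX1 opprB -!exprM; apply: eqm_1subX.
    by rewrite leq_pmull.
  apply: sparse_prod => j _; apply: sparse_sum => a _; rewrite -!exprM.
  by apply: sparseXn; rewrite dvdn_mull // dvdn_mulr.
have sV : sparse T.+1 (B2 * Binv).
  apply: sparse_mul => //; apply: sparse_prod => j _; apply: sparse_add; first exact: sparse1.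
  by rewrite -exprM; apply: sparseXn; rewrite dvdn_mull.
have h6 : eqm N.+1 E (theta F M * (B2 * Binv)).
  apply: (eqm_cancel hB); apply: eqm_trans h5 _.
  have -> : B1 * (theta F M * (B2 * Binv)) = theta F M * B2 * (B1 * Binv) by ring.
  rewrite -[X in eqm _ X _]mulr1; apply: eqmM => //; [exact: eqm_refl | exact: eqm_sym].
rewrite (eqm_coef h6 (ltnSn N)) /theta mulr_suml coef_sum big1 // => j _.
rewrite -mulrA -signr_odd; case: (odd _); rewrite ?expr1 ?expr0 ?mulN1r ?mul1r ?coefN;
  rewrite coefXnM; case: ifP => // hlt; rewrite ?sV ?oppr0 //; apply: qnr_ndvd;
  by rewrite leqNgt hlt.
Qed.
End Main.
Section Multirank.
Variables (T n : nat).
Implicit Type F : {ffun 'I_T -> opart n}.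

Lemma lenkE F (k0 : 'I_T) : lenk F k0.+1 = opart_len (F k0).
Proof.
rewrite /lenk /= (insubT (fun x => (x < T)%N) (ltn_ord k0)) /=.
by congr (opart_len (F _)); apply: val_inj.
Qed.

Lemma Posz_sum (r : seq nat) (f : nat -> nat) :
  ((\sum_(i <- r) f i)%N)%:Z = \sum_(i <- r) (f i)%:Z.
Proof. by apply: (big_morph Posz) => // x y; rewrite PoszD. Qed.

Lemma multirank_wt F : ~~ odd T ->
  multirank F = (wt F)%:Z - (T.+1)%:Z * (\sum_(0 <= k < T./2) lenk F (T - k))%N%:Z.
Proof.
move=> ev; set h := T./2.
have hT : T = (h + h)%N by rewrite -{1}(odd_double_half T) (negbTE ev) add0n -addnn.
set L := lenk F.
have ewt : wt F = (\sum_(0 <= k < h) k.+1 * L k.+1 + \sum_(0 <= k < h) (T - k) * L (T - k))%N.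
  rewrite /wt (eq_bigr (fun k0 : 'I_T => k0.+1 * L k0.+1)%N); last by move=> k0 _; rewrite /L lenkE.
  rewrite -(big_mkord xpredT (fun k => k.+1 * L k.+1)%N) (@big_cat_nat _ _ _ h) //; last by rewrite hT leq_addr.
  congr (_ + _)%N.
  rewrite -{1}[h]add0n big_addn big_nat_rev add0n.
  have eTh : (T - h = h)%N by rewrite hT addnK.
  rewrite eTh; apply: eq_big_nat => k /andP [_ hk].
  by have -> : ((h - k.+1 + h).+1 = T - k)%N by rewrite hT; lia.
have emr : multirank F = (\sum_(0 <= k < h) k.+1 * L k.+1)%N%:Z - (\sum_(0 <= k < h) k.+1 * L (T - k))%N%:Z.
  rewrite /multirank -/h big_add1 /= !Posz_sum -sumrB; apply: eq_bigr => k _.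
  by rewrite subSS !PoszM mulrBr.
have eDB : (\sum_(0 <= k < h) (T - k) * L (T - k) + \sum_(0 <= k < h) k.+1 * L (T - k) = T.+1 * \sum_(0 <= k < h) L (T - k))%N.
  rewrite -big_split big_distrr /=; apply: eq_big_nat => k /andP [_ hk].
  by rewrite -mulnDl; congr (_ * _)%N; rewrite hT; lia.
rewrite emr ewt -PoszM -eDB !PoszD; ring.
Qed.
End Multirank.
Lemma Nbar_pred T n (F : {ffun 'I_T -> opart n}) i : ~~ odd T -> (i <= T)%N ->
  (((multirank F - i%:Z) %% (T.+1)%:Z)%Z == 0) = (T.+1 %| wt F + (T.+1 - i))%N.
Proof.
move=> ev le; rewrite multirank_wt //.
set C := (\sum_(0 <= k < T./2) lenk F (T - k))%N.
have -> : (wt F)%:Z - (T.+1)%:Z * C%:Z - i%:Z = (- C%:Z - 1) * (T.+1)%:Z + (wt F + (T.+1 - i))%N%:Z.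
  rewrite PoszD -subzn; last by apply: leq_trans le _.
  ring.
by rewrite modzMDl modz_nat /dvdn.
Qed.

Section Orth.
Variable C : fieldType.
Variables (t : nat) (z : C).
Hypothesis prim : t.-primitive_root z.

Lemma orth r : \sum_(a < t) (z ^+ r) ^+ a = if (t %| r)%N then t%:R else 0.
Proof.
case: ifP => h.
  have -> : z ^+ r = 1 by apply/eqP; rewrite -(prim_order_dvd prim).
  by rewrite (eq_bigr (fun=> 1)) ?sumr_const ?card_ord // => a _; rewrite expr1n.
have ne : z ^+ r - 1 != 0 by rewrite subr_eq0 -(prim_order_dvd prim) h.
apply: (mulfI ne); rewrite mulr0 -subrX1 exprAC (prim_expr_order prim) expr1n subrr //.
Qed.
End Orth.
Lemma card_setR (T : finType) (P : pred T) : (#|[set x | P x]|%:R : algC) = \sum_(x | P x) 1.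
Proof. by rewrite sumr_const cardsE. Qed.

Lemma prod_odd (R : comNzRingType) (I : Type) (r : seq I) (f : I -> {poly R}) :
  (forall i, exists g, f i = 1 + 2%:R * g) -> exists b, \prod_(i <- r) f i = 1 + 2%:R * b.
Proof.
move=> h; elim/big_rec: _ => [|i p _ [b ->]]; first by exists 0; rewrite mulr0 addr0.
have [g ->] := h i; exists (g + b + 2%:R * g * b); ring.
Qed.

Lemma pbar_even T n : (0 < n)%N -> ~~ odd (pbar T n).
Proof.
case: n => // M _.
have e := expand (1 : int) T M.+1.
have [b hb] : exists b, \prod_(k0 < T) \prod_(j < M.+1) Lf (1 : int) M.+1 k0 j = 1 + 2%:R * b.
  apply: prod_odd => k0; apply: prod_odd => j; rewrite Lf_par; by eexists.
rewrite hb coefD coef1 /= add0r mulr_natl coefMn in e.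
rewrite (eq_bigr (fun=> 1)) ?sumr_const in e; last by move=> F _; rewrite expr1n.
have : (pbar T M.+1)%:Z = (b`_M.+1) * 2%:R.
  by rewrite /pbar cardsE -natz -e mulr_natr.
move/(congr1 absz) => /= ->; rewrite abszM oddM /= andbF //.
Qed.
Lemma sum_zero T n (oddt : odd T.+1) (n1 : (0 < n)%N) (hq : qnr n T.+1)
  (z : algC) (prim : T.+1.-primitive_root z) :
  \sum_(F : {ffun 'I_T -> opart n} | colored_opart F) z ^+ wt F = 0.
Proof.
case: n n1 hq => // M _ hq.
rewrite -expand; exact: (vanish prim oddt hq).
Qed.

Lemma count T n i (prT : prime T.+1) (oddt : odd T.+1) (n1 : (0 < n)%N) (hq : qnr n T.+1) :
  (i <= T)%N -> (T.+1 * Nbar T i T.+1 n = pbar T n)%N.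
Proof.
move=> le.
have [z prim] := C_prim_root_exists (ltn0Sn T).
have ev : ~~ odd T by move: oddt => /=; case: (odd T).
apply/eqP; rewrite -(eqr_nat algC) natrM; apply/eqP.
rewrite /Nbar /pbar !card_setR.
under eq_bigl => F do rewrite (Nbar_pred F ev le).
rewrite big_mkcondr mulr_sumr.
transitivity (\sum_(F : {ffun 'I_T -> opart n} | colored_opart F)
               \sum_(a < T.+1) (z ^+ (wt F + (T.+1 - i))) ^+ a).
  apply: eq_bigr => F _; rewrite (orth prim); case: ifP => _; [exact: mulr1 | exact: mulr0].
rewrite exchange_big big_ord_recl /=.
under eq_bigr => F _ do rewrite expr0.
rewrite [X in _ + X]big1 ?addr0 // => a _.
have prim' : T.+1.-primitive_root (z ^+ a.+1).
  rewrite prim_root_exp_coprime // coprime_sym prime_coprime //.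
  by rewrite gtnNdvd // ltnS.
under eq_bigr => F _ do rewrite exprAC exprD.
by rewrite -mulr_suml (sum_zero oddt n1 hq prim') mul0r.
Qed.
Local Close Scope ring_scope.

Theorem theorem2p3 (t n : nat) :
  prime t -> odd t -> 1 <= n -> qnr n t ->
  (forall i, i <= t - 1 ->
     t * Nbar (t - 1) i t n = pbar (t - 1) n /\ ~~ odd (Nbar (t - 1) i t n))
  /\ (2 * t %| pbar (t - 1) n).
Proof.
case: t => [|T] pt ot n1 hq; first by move: (prime_gt1 pt).
rewrite subn1 /=.
have ev := pbar_even T n1.
have hc := fun i (le : i <= T) => @count T n i pt ot n1 hq le.
split.
  move=> i le; split; first exact: hc.
  by apply: contra ev => oN; rewrite -(hc i le) oddM ot oN.
rewrite -(hc 0 (leq0n T)).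
set N0 := Nbar T 0 T.+1 n.
have hN0 : ~~ odd N0 by apply: contra ev => oN; rewrite -(hc 0 (leq0n T)) oddM ot oN.
rewrite -(odd_double_half N0) (negbTE hN0) add0n -muln2 mulnCA [T.+1 * 2]mulnC.
by apply: dvdn_mull; rewrite mulnC.
Qed.
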